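(* Consider a stochastic $K$-armed bandit with reward vectors in $[-R_{\max},R_{\max}]^K$ drawn i.i.d. with mean $\mathbf r$ having no ties, optimal arm $a^*$ with deterministic policy $\pi^*$, and $\Delta=\min_{a\ne a'}|r(a)-r(a')|$. Given a horizon $T$ (and target accuracy $\epsilon>0$), choosing the learning rate $\alpha=\mathcal O(T^{-3/7})$ and the barrier parameter $\eta=\mathcal O(T^{1/7})$, LB-SGB (defined in the context) ensures sub-linear regret: $$\mathbb E\Big[\sum_{t=1}^T(\pi^*-\pi_{\boldsymbol\theta_t})^\top\mathbf r\Big]\le\mathcal O\big(\Delta^{-2/7}T^{6/7}\big).$$
   Context: Softmax policy $\pi_{\boldsymbol\theta}(a)=e^{\theta(a)}/\sum_be^{\theta(b)}$. LB-SGB with step size $\alpha$ and barrier parameter $\eta$: start from $\boldsymbol\theta=\mathbf 0$; at round $t$ sample $a_t\sim\pi_{\boldsymbol\theta_t}$, observe $R_t(a_t)$, set $\hat r_t(a)=\mathbb I\{a_t=a\}R_t(a_t)/\pi_{\boldsymbol\theta_t}(a)$ and update $\boldsymbol\theta_{t+1}=\boldsymbol\theta_t+\alpha\big[(\mathrm{diag}(\pi_{\boldsymbol\theta_t})-\pi_{\boldsymbol\theta_t}\pi_{\boldsymbol\theta_t}^\top)\hat{\mathbf r}_t+\frac1\eta(\mathbf 1-K\pi_{\boldsymbol\theta_t})\big]$. The hyperparameters depend on the horizon $T$. *)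

(* Defs.v *)
From HB Require Import structures.
From mathcomp Require Import all_boot all_order all_algebra.
From mathcomp Require Import all_classical all_reals all_analysis.
Set Implicit Arguments. Unset Strict Implicit. Unset Printing Implicit Defensive.
Import Order.TTheory GRing.Theory Num.Theory.
Local Open Scope ring_scope.

Section LBSGB.
Context {R : realType} {K : nat}.

Definition softmax (th : 'I_K -> R) (a : 'I_K) : R :=
  expR (th a) / \sum_(b < K) expR (th b).

Definition rhat (th : 'I_K -> R) (at_ : 'I_K) (rew : R) (b : 'I_K) : R :=
  (if at_ == b then rew else 0) / softmax th b.

(* one LB-SGB step:
   theta' = theta + alpha [ (diag pi - pi pi^T) rhat + (1/eta)(1 - K pi) ] *)
Definition lbsgb_step (alpha eta : R) (th : 'I_K -> R) (at_ : 'I_K) (rew : R)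
    : 'I_K -> R :=
  fun a => th a + alpha *
    (softmax th a * rhat th at_ rew a
     - softmax th a * (\sum_(b < K) softmax th b * rhat th at_ rew b)
     + eta^-1 * (1 - K%:R * softmax th a)).

Definition inst_regret (r : 'I_K -> R) (astar : 'I_K) (th : 'I_K -> R) : R :=
  \sum_(a < K) ((if a == astar then 1 else 0) - softmax th a) * r a.

Definition is_min_gap (r : 'I_K -> R) (D : R) : Prop :=
  (forall a a' : 'I_K, a != a' -> D <= `|r a - r a'|) /\
  (exists a a' : 'I_K, a != a' /\ D = `|r a - r a'|).

End LBSGB.

(* Each round draws omega ~ P independently (reward vector (X a omega)_a),
   samples a ~ pi_theta, observes X a omega and updates.
   exp_regret (n+1) th = regret(th) + E_{omega, a ~ pi_th}[exp_regret n th'] *)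
Fixpoint exp_regret {R : realType} {K : nat} {d : measure_display}
    {T : measurableType d} (P : probability T R) (X : 'I_K -> T -> R)
    (r : 'I_K -> R) (astar : 'I_K) (alpha eta : R) (n : nat) (th : 'I_K -> R)
    : \bar R :=
  match n with
  | 0 => 0%E
  | n'.+1 =>
      ((inst_regret r astar th)%:E +
       \int[P]_w (\sum_(a < K) (softmax th a)%:E *
           exp_regret P X r astar alpha eta n'
             (lbsgb_step alpha eta th a (X a w))))%E
  end.

(* Main.v *)
Require Import Defs.
From HB Require Import structures.
From mathcomp Require Import all_boot all_order all_algebra.
From mathcomp Require Import all_classical all_reals all_analysis.
From mathcomp Require Import ring lra.
Import Order.TTheory GRing.Theory Num.Theory.
Local Open Scope ring_scope.

Lemma exp_up {R : realType} (x : R) : x <= 1/2 -> expR x <= 1 + x + 2 * x^+2.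
Proof.
move=> hx; have e0 := expR_gt0 x.
have h1 : 1 - x <= (expR x)^-1 by rewrite -expRN; have := expR_ge1Dx (-x); lra.
have h2 : expR x * (1 - x) <= 1.
  have := ler_wpM2l (ltW e0) h1; rewrite mulfV ?gt_eqF //.
have hx2 : 0 <= x^+2 * (1 - 2 * x) by apply: mulr_ge0; [exact: sqr_ge0| lra].
nra.
Qed.

Section Aux.
Context {R : realType} {K : nat}.
Implicit Types (th d : 'I_K -> R).

Definition Z th := \sum_(b < K) expR (th b).

Lemma Z_gt0 (i0 : 'I_K) th : 0 < Z th.
Proof.
rewrite /Z (bigD1 i0) //=; apply: (lt_le_trans (expR_gt0 (th i0))).
by rewrite lerDl sumr_ge0 // => i _; exact/ltW/expR_gt0.
Qed.

Lemma softmax_gt0 (i0 : 'I_K) th a : 0 < softmax th a.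
Proof. by rewrite /softmax divr_gt0 ?expR_gt0 // (Z_gt0 i0). Qed.

Lemma softmax_sum1 (i0 : 'I_K) th : \sum_(a < K) softmax th a = 1.
Proof.
rewrite /softmax -mulr_suml divff //; exact/lt0r_neq0/(Z_gt0 i0).
Qed.

Lemma wavg_bound (p y : 'I_K -> R) (c : R) : (forall b, 0 <= p b) -> \sum_(b < K) p b = 1 ->
  (forall b, `|y b| <= c) -> `|\sum_(b < K) p b * y b| <= c.
Proof.
move=> p0 p1 yc; apply: (le_trans (ler_norm_sum _ _ _)).
apply: (@le_trans _ _ (\sum_(b < K) p b * c)).
  by apply: ler_sum => b _; rewrite normrM ger0_norm // ler_wpM2l.
by rewrite -mulr_suml p1 mul1r.
Qed.

Lemma wavg_lb (p y : 'I_K -> R) (c : R) : (forall b, 0 <= p b) -> \sum_(b < K) p b = 1 ->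
  (forall b, c <= y b) -> c <= \sum_(b < K) p b * y b.
Proof.
move=> p0 p1 yc; apply: (@le_trans _ _ (\sum_(b < K) p b * c)).
  by rewrite -mulr_suml p1 mul1r.
by apply: ler_sum => b _; rewrite ler_wpM2l.
Qed.

Definition Jf (r : 'I_K -> R) th := \sum_(a < K) softmax th a * r a.
Definition Phi (eta : R) r th := Jf r th + eta^-1 * (\sum_(b < K) th b - K%:R * ln (Z th)).
Definition grad (eta : R) r th b :=
  softmax th b * (r b - Jf r th) + eta^-1 * (1 - K%:R * softmax th b).

Lemma Jf_bound (i0 : 'I_K) (r : 'I_K -> R) (Rm : R) th : (forall b, `|r b| <= Rm) -> `|Jf r th| <= Rm.
Proof.
move=> hr; apply: wavg_bound => // [b|]; [exact/ltW/(softmax_gt0 i0)|exact: softmax_sum1].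
Qed.

Section Smooth.
Variables (i0 : 'I_K) (r : 'I_K -> R) (Rm : R) (th d : 'I_K -> R) (del : R).
Hypothesis hr : forall b, `|r b| <= Rm.
Hypothesis hd : forall b, `|d b| <= del.
Hypothesis hdel : del <= 1/2.

Let p := softmax th.
Let D := \sum_(b < K) p b * expR (d b).
Let u b := expR (d b) - 1 - d b.

Let p0 b : 0 <= p b. Proof. exact/ltW/(softmax_gt0 i0). Qed.
Let p1 : \sum_(b < K) p b = 1. Proof. exact: softmax_sum1. Qed.

Let u_bd b : 0 <= u b <= 2 * del^+2.
Proof.
have := expR_ge1Dx (d b); have hb := hd b.
have hdel' := hdel.
have : d b <= 1/2 by move: hb; rewrite ler_norml => /andP[]; lra.
move/exp_up => h1 h2.
have : d b ^+ 2 <= del ^+ 2.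
  by rewrite -real_normK ?num_real // ler_sqr ?nnegrE //; apply: le_trans hb.
rewrite /u; move=> h3; apply/andP; split; lra.
Qed.

Let del0 : 0 <= del. Proof. exact: le_trans (normr_ge0 _) (hd i0). Qed.

Let ZD : Z (fun b => th b + d b) = Z th * D.
Proof.
rewrite /Z /D /p mulr_sumr; apply: eq_bigr => b _.
rewrite expRD /softmax mulrA mulrCA mulfV ?mulr1 //; exact/lt0r_neq0/(Z_gt0 i0).
Qed.

Let D_ge : 1/2 <= D.
Proof.
have hdel' := hdel.
apply: wavg_lb => // b; have := expR_ge1Dx (d b); have := hd b.
rewrite ler_norml => /andP[]; lra.
Qed.

Let sm_dD b : softmax (fun b => th b + d b) b = p b * expR (d b) / D.
Proof.
have hD := D_ge.
rewrite [LHS]/softmax -[\sum_(b0 < K) _]/(Z _) ZD /p /softmax expRD invfM -/(Z th).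
have := Z_gt0 i0 th; move=> hZ.
field; apply/andP; split; apply/lt0r_neq0; lra.
Qed.

Lemma J_smooth : Jf r th + \sum_(b < K) p b * (r b - Jf r th) * d b - 16 * Rm * del^+2
   <= Jf r (fun b => th b + d b).
Proof.
have hdel' := hdel; have D_ge' := D_ge.
set J := Jf r th; set P1 := \sum_(b < K) _.
set m := \sum_(b < K) p b * (d b + u b).
set U := \sum_(b < K) p b * (u b * (r b - J)).
have hJ : `|J| <= Rm := Jf_bound i0 r Rm th hr.
have hrJ b : `|r b - J| <= 2 * Rm.
  by apply: (le_trans (ler_normB _ _)); have := hr b; lra.
have hU : `|U| <= 4 * Rm * del^+2.
  apply: wavg_bound => // b; rewrite normrM.
  have := u_bd b; move=> /andP[h1 h2]; rewrite ger0_norm //.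
  have := hrJ b; have := normr_ge0 (r b - J); nra.
have hP1 : `|P1| <= 2 * Rm * del.
  rewrite /P1 (eq_bigr (fun b => p b * ((r b - J) * d b))); last by move=> b _; rewrite mulrA.
  apply: wavg_bound => // b; rewrite normrM.
  have := hrJ b; have := hd b; have := normr_ge0 (r b - J); have := normr_ge0 (d b); nra.
have hm : `|m| <= 2 * del.
  apply: (le_trans (@wavg_bound p (fun b => d b + u b) (del + 2 * del^+2) p0 p1 _)); last by have := del0; nra.
  move=> b; apply: (le_trans (ler_normD _ _)); have := hd b; have := u_bd b.
  by move=> /andP[h1 h2]; rewrite (ger0_norm h1); lra.
have hDm : D = 1 + m.
  rewrite /D /m -p1 -big_split /=; apply: eq_bigr => b _; rewrite /u; ring.
have hN : \sum_(b < K) p b * expR (d b) * r b - J * D = P1 + U.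
  rewrite /D mulr_sumr -sumrB /P1 /U -big_split /=.
  have -> : \sum_(b < K) (p b * expR (d b) * r b - J * (p b * expR (d b))) =
    \sum_(b < K) (p b * (r b - J) * d b + p b * (u b * (r b - J)))
    + (\sum_(b < K) p b * r b - J * \sum_(b < K) p b).
    rewrite mulr_sumr -sumrB -big_split /=; apply: eq_bigr => b _; rewrite /u; ring.
  by rewrite p1 mulr1 /J /Jf subrr addr0.
have hJ' : Jf r (fun b => th b + d b) = (\sum_(b < K) p b * expR (d b) * r b) / D.
  rewrite /Jf mulr_suml; apply: eq_bigr => b _; rewrite sm_dD; field.
  apply/lt0r_neq0; lra.
rewrite hJ'; have Dpos : 0 < D by lra.
rewrite ler_pdivlMr //.
have e1 : (J + P1 - 16 * Rm * del ^+ 2) * D = J * D + P1 * (1 + m) - 16 * Rm * del^+2 * D.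
  by rewrite hDm; ring.
rewrite e1.
have hPm : `|P1 * m| <= 4 * Rm * del ^+2.
  rewrite normrM; have := normr_ge0 P1; have := normr_ge0 m; nra.
move: hPm hU; rewrite !ler_norml.
have : 0 <= Rm by exact: le_trans (normr_ge0 _) (hr i0).
nra.
Qed.

Lemma Phi_smooth eta : 1 <= eta ->
  Phi eta r th + \sum_(b < K) grad eta r th b * d b - (16 * Rm + 2 * K%:R) * del^+2
   <= Phi eta r (fun b => th b + d b).
Proof.
move=> he; have hdel' := hdel; have D_ge' := D_ge; have del0' := del0.
have hJ := J_smooth.
set ie := eta^-1.
have ie0 : 0 < ie by rewrite /ie invr_gt0; lra.
have ie1 : ie <= 1 by rewrite /ie invf_le1 //; lra.
have hZ := Z_gt0 i0 th.
have eZ : ln (Z (fun b => th b + d b)) = ln (Z th) + ln D.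
  by rewrite ZD lnM // posrE; lra.
have hlnD : ln D <= \sum_(b < K) p b * d b + 2 * del^+2.
  have -> : D = 1 + (D - 1) by ring.
  apply: (le_trans (le_ln1Dx _)); first lra.
  have -> : D - 1 = \sum_(b < K) p b * d b + \sum_(b < K) p b * u b.
    rewrite /D -big_split /= -[X in _ - X]p1 -sumrB; apply: eq_bigr => b _; rewrite /u; ring.
  rewrite lerD2l; apply: (le_trans (ler_norm _)); apply: wavg_bound => // b.
  by have := u_bd b => /andP[h1 h2]; rewrite ger0_norm.
have eS : \sum_(b < K) (th b + d b) = \sum_(b < K) th b + \sum_(b < K) d b by rewrite big_split.
have eG : \sum_(b < K) grad eta r th b * d b = \sum_(b < K) p b * (r b - Jf r th) * d b
   + ie * (\sum_(b < K) d b - K%:R * \sum_(b < K) p b * d b).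
  rewrite mulr_sumr -sumrB mulr_sumr -big_split /=; apply: eq_bigr => b _.
  rewrite /grad -/p -/ie; ring.
rewrite /Phi eZ eS eG -/ie.
have h1 := ler_wpM2l (ltW (mulr_gt0 ie0 (ltr0n R 2))) hlnD.
have hK : 0 <= K%:R :> R by [].
set A1 := ln D; set A2 := \sum_(b < K) p b * d b.
have h2 : ie * K%:R * (A1 - A2) <= K%:R * (2 * del^+2).
  have : A1 - A2 <= 2 * del^+2 by rewrite /A1 /A2; lra.
  move=> h.
  have q1 : 0 <= (1 - ie) * (K%:R * (2 * del^+2)).
    by apply: mulr_ge0; [lra| apply: mulr_ge0 => //; have := sqr_ge0 del; lra].
  have q2 : 0 <= (ie * K%:R) * (2 * del^+2 - (A1 - A2)).
    by apply: mulr_ge0; [apply: mulr_ge0 => //; lra| lra].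
  nra.
nra.
Qed.

End Smooth.
End Aux.

Lemma int_affine {R : realType} {K : nat} (d : measure_display) (T : measurableType d)
  (P : probability T R) (X : 'I_K -> T -> R) (r : 'I_K -> R) (Rm : R) (c0 : R) (c : 'I_K -> R) :
  (forall a, measurable_fun setT (X a)) -> (forall a w, `|X a w| <= Rm) ->
  (forall a, (\int[P]_w (X a w)%:E = (r a)%:E)%E) ->
  (\int[P]_w ((c0 + \sum_(a < K) c a * X a w)%:E) = (c0 + \sum_(a < K) c a * r a)%:E)%E.
Proof.
move=> mX bX iX.
have intX a : P.-integrable setT (EFin \o X a).
  apply: measurable_bounded_integrable => //.
    by apply: (@le_lt_trans _ _ 1%E); [exact: probability_le1 | exact: ltry].
  exists Rm; split; first exact: num_real.
  by move=> M hM w _; apply: le_trans (bX a w) (ltW hM).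
have intcX a : P.-integrable setT (fun w => (c a * X a w)%:E).
  apply: (eq_integrable measurableT (fun w => ((c a)%:E * (X a w)%:E)%E)).
    by move=> w _; rewrite EFinM.
  exact: (integrableZl measurableT (c a) (intX a)).
under eq_integral do rewrite EFinD -sumEFin.
rewrite (integralD measurableT); last 2 first.
- exact: (finite_measure_integrable_cst _ _ measurableT).
- apply: (integrable_sum measurableT) => a _.
  exact: intcX.
rewrite integral_cst // [X in (c0%:E * X)%E](_ : _ = 1%E); last exact: probability_setT.
rewrite mule1 (integral_sum measurableT); last first.
  exact: intcX.
rewrite EFinD -sumEFin; congr (_ + _)%E; apply: eq_bigr => a _.
under eq_integral do rewrite EFinM.
by rewrite (integralZl measurableT (intX a)) iX EFinM.
Qed.

Section Aux2.
Context {R : realType} {K : nat}.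
Implicit Types (th d : 'I_K -> R).

Definition ghat (eta : R) th (a : 'I_K) (x : R) (b : 'I_K) : R :=
  (if a == b then x else 0) - softmax th b * x + eta^-1 * (1 - K%:R * softmax th b).

Lemma step_eq (i0 : 'I_K) alpha eta th a x :
  lbsgb_step alpha eta th a x = (fun b => th b + alpha * ghat eta th a x b).
Proof.
apply: funext => b; rewrite /lbsgb_step /ghat.
have hs c : softmax th c * rhat th a x c = if a == c then x else 0.
  rewrite /rhat mulrC -mulrA mulVf ?mulr1 //; exact/lt0r_neq0/(softmax_gt0 i0).
rewrite hs; congr (_ + _ * _).
have -> : \sum_(c < K) softmax th c * rhat th a x c = x.
  under eq_bigr do rewrite hs.
  rewrite (bigD1 a) //= eqxx big1 ?addr0 // => c /negbTE.
  by rewrite eq_sym => ->.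
by [].
Qed.

Lemma softmax_le1 (i0 : 'I_K) th b : softmax th b <= 1.
Proof.
rewrite -(softmax_sum1 i0 th) (bigD1 b) //= lerDl sumr_ge0 // => c _.
exact/ltW/(softmax_gt0 i0).
Qed.

Lemma ghat_bound (i0 : 'I_K) (eta : R) th a (x : R) b (Rm : R) : `|x| <= Rm -> 1 <= eta ->
  `|ghat eta th a x b| <= Rm + K%:R.
Proof.
move=> hx he; rewrite /ghat.
set p := softmax th b.
have p0 : 0 < p := softmax_gt0 i0 th b. have p1 : p <= 1 := softmax_le1 i0 th b.
have hK : 1 <= K%:R :> R by rewrite ler1n; case: (K) i0 => [[]|].
have ie0 : 0 < eta^-1 by rewrite invr_gt0; lra.
have ie1 : eta^-1 <= 1 by rewrite invf_le1 //; lra.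
have h2 : `|eta^-1 * (1 - K%:R * p)| <= K%:R.
  rewrite normrM (gtr0_norm ie0).
  have q1 : 0 <= K%:R * (1 - p) by apply: mulr_ge0; lra.
  have q2 : 0 <= K%:R * p by apply: mulr_ge0; lra.
  have : `|1 - K%:R * p| <= K%:R by rewrite ler_norml; apply/andP; split; nra.
  have := normr_ge0 (1 - K%:R * p); nra.
apply: (le_trans (ler_normD _ _)); apply: lerD => //.
have -> : (if a == b then x else 0) - p * x = ((if a == b then 1 else 0) - p) * x.
  by case: (a == b); ring.
rewrite normrM; have : `|(if a == b then 1 else 0) - p| <= 1.
  by case: (a == b); rewrite ler_norml; apply/andP; split; lra.
have := normr_ge0 x; have := normr_ge0 ((if a == b then 1 else 0) - p :> R); nra.
Qed.

End Aux2.

Section Aux3.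
Context {R : realType} {K : nat}.
Implicit Types (th d : 'I_K -> R).

Lemma regret_eq (i0 : 'I_K) (r : 'I_K -> R) astar th :
  inst_regret r astar th = r astar - Jf r th.
Proof.
rewrite /inst_regret /Jf; under eq_bigr do rewrite mulrBl; rewrite sumrB.
congr (_ - _); rewrite (bigD1 astar) //= eqxx mul1r big1 ?addr0 // => c /negbTE ->.
by rewrite mul0r.
Qed.

Lemma dom (i0 : 'I_K) (r : 'I_K -> R) (Rm eta : R) th (astar : 'I_K) :
 (forall b, `|r b| <= Rm) -> (forall a, r a <= r astar) -> 1 <= eta ->
 inst_regret r astar th <=
   (1 + 8 * Rm) * eta^+2 * \sum_(b < K) (grad eta r th b)^+2 + 3 * K%:R^+2 * eta^-1.
Proof.
move=> hr hstar he.
rewrite (regret_eq i0).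
have hJ := Jf_bound i0 r Rm th hr.
have hrs := hr astar.
have Rm0 : 0 <= Rm by exact: le_trans (normr_ge0 _) hrs.
set J := Jf r th.
have hrho0 : 0 <= r astar - J.
  have -> : r astar - J = \sum_(b < K) softmax th b * (r astar - r b).
    rewrite /J /Jf; symmetry; under eq_bigr do rewrite mulrBr.
    by rewrite sumrB -mulr_suml (softmax_sum1 i0) mul1r.
  apply: wavg_lb; [move=> b; exact/ltW/(softmax_gt0 i0)|exact: softmax_sum1|].
  by move=> b; have := hstar b; lra.
have hrho2 : r astar - J <= 2 * Rm.
  by rewrite /J; move: hJ hrs; rewrite !ler_norml => /andP[? ?] /andP[? ?]; lra.
set g := grad eta r th astar.
have hG : g^+2 <= \sum_(b < K) (grad eta r th b)^+2.
  rewrite (bigD1 astar) //= lerDl sumr_ge0 // => c _; exact: sqr_ge0.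
set pi := softmax th astar.
have pi0 : 0 < pi := softmax_gt0 i0 th astar.
have pi1 : pi <= 1 := softmax_le1 i0 th astar.
set ie := eta^-1.
have ie0 : 0 < ie by rewrite /ie invr_gt0; lra.
have ie1 : ie <= 1 by rewrite /ie invf_le1 //; lra.
have eie : eta * ie = 1 by rewrite /ie mulfV //; apply/lt0r_neq0; lra.
have hK : 1 <= K%:R :> R by rewrite ler1n; case: (K) i0 => [[]|].
have eg : g = pi * (r astar - J) + ie * (1 - K%:R * pi) by [].
move: hrho0 hrho2 eg; set rho := r astar - J => hrho0 hrho2 eg.
suff : rho <= (1 + 8 * Rm) * eta^+2 * g^+2 + 3 * K%:R^+2 * ie.
  move=> h; apply: (le_trans h); rewrite lerD2r; apply: ler_wpM2l => //.
  by apply: mulr_ge0; [lra| exact: sqr_ge0].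
have e2 : 0 <= eta^+2 * g^+2 by apply: mulr_ge0; exact: sqr_ge0.
have e3 : 0 <= Rm * (eta^+2 * g^+2) by apply: mulr_ge0.
have -> : (1 + 8 * Rm) * eta^+2 * g^+2 = eta^+2 * g^+2 + 8 * (Rm * (eta^+2 * g^+2)) by ring.
case: (lerP 1 (2 * K%:R * pi)) => hc.
- have h1 : rho <= 2 * K%:R * pi * rho.
    have : 0 <= (2 * K%:R * pi - 1) * rho by apply: mulr_ge0; lra.
    nra.
  have h2 : 2 * K%:R * (pi * rho) <= 2 * K%:R * g + 2 * K%:R^+2 * ie.
    rewrite eg.
    have : ie * (K%:R * pi - 1) <= ie * K%:R by apply: ler_wpM2l; nra.
    nra.
  have h3 : 2 * K%:R * g <= eta^+2 * g^+2 + K%:R^+2 * ie^+2.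
    have := sqr_ge0 (eta * g - K%:R * ie).
    have -> : (eta * g - K%:R * ie)^+2 = eta^+2 * g^+2 - 2 * K%:R * g * (eta * ie) + K%:R^+2 * ie^+2 by ring.
    rewrite eie; lra.
  have h4 : K%:R^+2 * ie^+2 <= K%:R^+2 * ie.
    apply: ler_wpM2l; first exact: sqr_ge0.
    by rewrite expr2; nra.
  nra.
- have h1 : ie / 2 <= g.
    rewrite eg; have : 0 <= pi * rho by apply: mulr_ge0; lra.
    nra.
  have h2 : 1 / 4 <= eta^+2 * g^+2.
    have h5 : 1 / 2 <= eta * g.
      have := ler_wpM2l (ltW (lt_le_trans ltr01 he)) h1.
      by rewrite mulrA eie.
    have -> : eta^+2 * g^+2 = (eta * g)^+2 by ring.
    rewrite expr2; nra.
  nra.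
Qed.

End Aux3.

Lemma int_mono_ge0 {R : realType} (d : measure_display) (T : measurableType d)
  (P : probability T R) (f g : T -> \bar R) :
  (forall w, (0 <= f w)%E) -> (forall w, (f w <= g w)%E) ->
  (\int[P]_w f w <= \int[P]_w g w)%E.
Proof.
move=> f0 fg.
have g0 w : (0 <= g w)%E by apply: le_trans (f0 w) (fg w).
rewrite !ge0_integralTE //; apply: ereal_sup_le => _ [h hf <-].
by exists h => // x; apply: le_trans (hf x) (fg x).
Qed.

Section Aux4.
Context {R : realType} {K : nat}.
Implicit Types (th : 'I_K -> R).

Lemma regret_ge0 (i0 : 'I_K) (r : 'I_K -> R) astar th :
  (forall a, r a <= r astar) -> 0 <= inst_regret r astar th.
Proof.
move=> hstar; rewrite (regret_eq i0).
have -> : r astar - Jf r th = \sum_(b < K) softmax th b * (r astar - r b).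
  rewrite /Jf; symmetry; under eq_bigr do rewrite mulrBr.
  by rewrite sumrB -mulr_suml (softmax_sum1 i0) mul1r.
apply: wavg_lb; [move=> b; exact/ltW/(softmax_gt0 i0)|exact: softmax_sum1|].
by move=> b; have := hstar b; lra.
Qed.

Lemma lin_identity (i0 : 'I_K) (eta : R) r th (x : 'I_K -> R) :
  let g := grad eta r th in
  let S1 := \sum_(b < K) g b * softmax th b in
  let S2 := \sum_(b < K) g b * (eta^-1 * (1 - K%:R * softmax th b)) in
  \sum_(a < K) softmax th a * (\sum_(b < K) g b * ghat eta th a (x a) b) =
  \sum_(a < K) (softmax th a * (g a - S1)) * x a + S2.
Proof.
move=> g S1 S2.
have e a : \sum_(b < K) g b * ghat eta th a (x a) b = x a * (g a - S1) + S2.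
  rewrite /ghat /S1 /S2.
  have -> : \sum_(b < K) g b * ((if a == b then x a else 0) - softmax th b * x a
      + eta^-1 * (1 - K%:R * softmax th b)) =
    \sum_(b < K) g b * (if a == b then x a else 0)
    - x a * \sum_(b < K) g b * softmax th b
    + \sum_(b < K) g b * (eta^-1 * (1 - K%:R * softmax th b)).
    rewrite mulr_sumr -sumrB -big_split /=; apply: eq_bigr => b _; ring.
  have -> : \sum_(b < K) g b * (if a == b then x a else 0) = x a * g a.
    rewrite (bigD1 a) //= eqxx big1 ?addr0; first by rewrite mulrC.
    by move=> c /negbTE; rewrite eq_sym => ->; rewrite mulr0.
  ring.
under eq_bigr do rewrite e.
have -> : \sum_(a < K) softmax th a * (x a * (g a - S1) + S2) =
  \sum_(a < K) softmax th a * (g a - S1) * x a + S2 * \sum_(a < K) softmax th a.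
  rewrite mulr_sumr -big_split /=; apply: eq_bigr => a _; ring.
by rewrite (softmax_sum1 i0) mulr1.
Qed.

Lemma grad_identity (i0 : 'I_K) (eta : R) r th :
  let g := grad eta r th in
  let S1 := \sum_(b < K) g b * softmax th b in
  let S2 := \sum_(b < K) g b * (eta^-1 * (1 - K%:R * softmax th b)) in
  \sum_(a < K) (softmax th a * (g a - S1)) * r a + S2 = \sum_(b < K) (g b)^+2.
Proof.
move=> g S1 S2.
have -> : \sum_(a < K) (softmax th a * (g a - S1)) * r a =
   \sum_(a < K) g a * (softmax th a * r a) - S1 * Jf r th.
  rewrite /Jf mulr_sumr -sumrB; apply: eq_bigr => a _; ring.
have -> : S1 * Jf r th = \sum_(b < K) g b * (softmax th b * Jf r th).
  rewrite /S1 mulr_suml; apply: eq_bigr => b _; ring.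
rewrite /S2 -sumrB -big_split /=; apply: eq_bigr => b _.
rewrite /g /grad; ring.
Qed.

End Aux4.

Section Main.
Context {R : realType} {K : nat}.

Lemma barrier_le0 (i0 : 'I_K) (th : 'I_K -> R) :
  \sum_(b < K) th b - K%:R * ln (Z th) <= 0.
Proof.
have -> : K%:R * ln (Z th) = \sum_(b < K) ln (Z th).
  by rewrite sumr_const card_ord mulr_natl.
rewrite subr_le0; apply: ler_sum => b _.
have hZ := Z_gt0 i0 th.
rewrite -{1}(expRK (th b)) ler_ln ?posrE ?expR_gt0 //.
rewrite /Z (bigD1 b) //= lerDl sumr_ge0 // => c _; exact/ltW/expR_gt0.
Qed.

Lemma Phi_le (i0 : 'I_K) (eta : R) r Rm (th : 'I_K -> R) :
  0 < eta -> (forall b, `|r b| <= Rm) -> Phi eta r th <= Rm.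
Proof.
move=> he hr; rewrite /Phi.
have := Jf_bound i0 r Rm th hr; rewrite ler_norml => /andP[_ h1].
have := barrier_le0 i0 th.
have ie0 : 0 < eta^-1 by rewrite invr_gt0.
move=> h2; have := ler_wpM2l (ltW ie0) h2; rewrite mulr0; lra.
Qed.

Lemma main_ind (i0 : 'I_K) (d : measure_display) (T : measurableType d)
  (P : probability T R) (X : 'I_K -> T -> R) (r : 'I_K -> R) (astar : 'I_K)
  (Rm alpha eta : R) :
  (forall a, measurable_fun setT (X a)) -> (forall a w, `|X a w| <= Rm) ->
  (forall a, (\int[P]_w (X a w)%:E = (r a)%:E)%E) ->
  (forall b, `|r b| <= Rm) -> (forall a, r a <= r astar) ->
  1 <= eta -> 0 < alpha -> alpha * (Rm + K%:R) <= 1/2 ->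
  let B := (1 + 8 * Rm) * eta^+2 / alpha in
  let A := 3 * K%:R^+2 / eta + B * (16 * Rm + 2 * K%:R) * (alpha * (Rm + K%:R))^+2 in
  forall n th, (0 <= exp_regret P X r astar alpha eta n th)%E /\
    (exp_regret P X r astar alpha eta n th <= (A * n%:R + B * (Rm - Phi eta r th))%:E)%E.
Proof.
move=> mX bX iX hr hstar he ha hag B A.
have Rm0 : 0 <= Rm by exact: le_trans (normr_ge0 _) (hr i0).
have B0 : 0 <= B.
  rewrite /B; apply: divr_ge0; last exact: ltW.
  by apply: mulr_ge0; [lra|exact: sqr_ge0].
have eBa : B * alpha = (1 + 8 * Rm) * eta^+2.
  by rewrite /B; field; apply/lt0r_neq0.
set del := alpha * (Rm + K%:R).
set Lc := 16 * Rm + 2 * K%:R.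
have eA : A = 3 * K%:R^+2 / eta + B * Lc * del^+2 by [].
elim=> [|n IH] th.
  split => //=; rewrite mulr0 add0r lee_fin; apply: mulr_ge0 => //.
  have := Phi_le i0 eta r Rm th (lt_le_trans ltr01 he) hr; lra.
have eS : exp_regret P X r astar alpha eta n.+1 th =
  ((inst_regret r astar th)%:E + \int[P]_w (\sum_(a < K) (softmax th a)%:E *
      exp_regret P X r astar alpha eta n (lbsgb_step alpha eta th a (X a w))))%E by [].
rewrite eS.
set f := (fun w => _ : \bar R).
have f0 w : (0 <= f w)%E.
  rewrite /f; apply: sume_ge0 => a _; apply: mule_ge0.
    by rewrite lee_fin; exact/ltW/(softmax_gt0 i0).
  exact: (IH _).1.
have rho0 := regret_ge0 i0 r astar th hstar.
split.
  by apply: adde_ge0; [rewrite lee_fin| apply: integral_ge0 => w _; exact: f0].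
set g := grad eta r th.
set S1 := \sum_(b < K) g b * softmax th b.
set S2 := \sum_(b < K) g b * (eta^-1 * (1 - K%:R * softmax th b)).
set K0 := A * n%:R + B * (Rm - Phi eta r th) + B * Lc * del^+2.
pose q (a : 'I_K) (x : R) := K0 - B * alpha * (\sum_(b < K) g b * ghat eta th a x b).
have hq a w : (exp_regret P X r astar alpha eta n (lbsgb_step alpha eta th a (X a w))
    <= (q a (X a w))%:E)%E.
  apply: le_trans ((IH _).2) _; rewrite lee_fin (step_eq i0).
  have hd b : `|alpha * ghat eta th a (X a w) b| <= del.
    rewrite normrM (gtr0_norm ha) /del; apply: ler_wpM2l; [exact: ltW|exact: ghat_bound].
  have hdel : del <= 1/2 by [].
  have := Phi_smooth i0 r Rm th (fun b => alpha * ghat eta th a (X a w) b) del hr hd hdel eta he.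
  rewrite -/g -/Lc => hP.
  have eG : \sum_(b < K) g b * (alpha * ghat eta th a (X a w) b) =
     alpha * \sum_(b < K) g b * ghat eta th a (X a w) b.
    by rewrite mulr_sumr; apply: eq_bigr => b _; ring.
  rewrite eG in hP.
  rewrite /q /K0.
  have := ler_wpM2l B0 hP.
  set Pn := Phi eta r _; set S := \sum_(b < K) _.
  move=> hB.
  have -> : B * alpha * S = B * (alpha * S) by ring.
  nra.
pose c0 := K0 - B * alpha * S2.
pose c (a : 'I_K) := - (B * alpha) * (softmax th a * (g a - S1)).
have hf w : (f w <= (c0 + \sum_(a < K) c a * X a w)%:E)%E.
  rewrite /f; apply: le_trans (_ : (\sum_(a < K) ((softmax th a)%:E * (q a (X a w))%:E) <= _)%E).
    apply: lee_sum => a _; apply: lee_wpmul2l; last exact: hq.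
    by rewrite lee_fin; exact/ltW/(softmax_gt0 i0).
  under eq_bigr do rewrite -EFinM.
  rewrite sumEFin lee_fin le_eqVlt; apply/orP; left; apply/eqP.
  have := lin_identity i0 eta r th (fun a => X a w); rewrite -/g -/S1 -/S2 => hl.
  rewrite /q.
  have -> : \sum_(a < K) softmax th a * (K0 - B * alpha * (\sum_(b < K) g b * ghat eta th a (X a w) b))
    = K0 * \sum_(a < K) softmax th a
      - B * alpha * \sum_(a < K) softmax th a * (\sum_(b < K) g b * ghat eta th a (X a w) b).
    rewrite mulr_sumr mulr_sumr -sumrB; apply: eq_bigr => a _; ring.
  rewrite hl (softmax_sum1 i0) mulr1 /c0 /c.
  have -> : \sum_(a < K) - (B * alpha) * (softmax th a * (g a - S1)) * X a w =
     - (B * alpha) * \sum_(a < K) softmax th a * (g a - S1) * X a w.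
    by rewrite mulr_sumr; apply: eq_bigr => a _; ring.
  rewrite -/S1 -/S2; ring.
have hint : (\int[P]_w f w <= (c0 + \sum_(a < K) c a * r a)%:E)%E.
  apply: le_trans (int_mono_ge0 _ _ P _ _ f0 hf) _.
  by rewrite (int_affine _ _ P X r Rm c0 c mX bX iX).
apply: le_trans (leeD (lexx _) hint) _; rewrite -EFinD lee_fin.
have hgi := grad_identity i0 eta r th; rewrite -/g -/S1 -/S2 in hgi.
have -> : c0 + \sum_(a < K) c a * r a = K0 - B * alpha * \sum_(b < K) (g b)^+2.
  rewrite /c0 /c -hgi.
  have -> : \sum_(a < K) - (B * alpha) * (softmax th a * (g a - S1)) * r a =
     - (B * alpha) * \sum_(a < K) softmax th a * (g a - S1) * r a.
    by rewrite mulr_sumr; apply: eq_bigr => a _; ring.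
  rewrite -/S1 -/S2; ring.
have hdom := dom i0 r Rm eta th astar hr hstar he.
rewrite -/g in hdom.
rewrite /K0 eBa.
have -> : (n.+1)%:R = n%:R + 1 :> R by rewrite -natr1.
rewrite [A * (_ + 1)]mulrDr mulr1.
move: hdom eA; set SG := \sum_(b < K) _; set E1 := 3 * K%:R ^+ 2 / eta.
set E2 := (1 + 8 * Rm) * eta ^+ 2 * SG; set E3 := B * Lc * del ^+ 2.
set E4 := A * n%:R; set E5 := B * (Rm - Phi eta r th).
move=> hdom eA'.
lra.
Qed.

End Main.

Lemma r_bound {R : realType} {K : nat} (d : measure_display) (T : measurableType d)
  (P : probability T R) (X : 'I_K -> T -> R) (r : 'I_K -> R) (Rm : R) a :
  (forall a, measurable_fun setT (X a)) -> (forall a w, `|X a w| <= Rm) ->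
  (forall a, (\int[P]_w (X a w)%:E = (r a)%:E)%E) -> `|r a| <= Rm.
Proof.
move=> mX bX iX.
have Rm0 : 0 <= Rm by exact: le_trans (normr_ge0 _) (bX a (point : T)).
rewrite -lee_fin -abse_EFin -(iX a).
apply: le_trans (le_abse_integral _ measurableT _) _.
  by apply/measurable_realfun.measurable_EFinP; exact: mX.
apply: le_trans (int_mono_ge0 _ _ P (fun w => `|(X a w)%:E|%E) (fun _ => Rm%:E) _ _) _.
- by move=> w; exact: abse_ge0.
- by move=> w; rewrite /= lee_fin; exact: bX.
rewrite integral_cst // [X in (_ * X)%E](_ : _ = 1%E); last exact: probability_setT.
by rewrite mule1.
Qed.

Lemma Phi0_ge {R : realType} {K : nat} (i0 : 'I_K) (eta : R) r Rm :
  1 <= eta -> (forall b, `|r b| <= Rm) ->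
  - Rm - K%:R^+2 <= Phi eta r (fun _ : 'I_K => 0).
Proof.
move=> he hr; rewrite /Phi.
have := Jf_bound i0 r Rm (fun _ => 0) hr; rewrite ler_norml => /andP[h1 _].
have eZ : Z (fun _ : 'I_K => 0 : R) = K%:R.
  by rewrite /Z expR0 sumr_const card_ord.
rewrite big1 // eZ add0r.
have hK : 1 <= K%:R :> R by rewrite ler1n; case: (K) i0 => [[]|].
have l0 : 0 <= ln (K%:R : R) by apply: ln_ge0.
have l1 : ln (K%:R : R) <= K%:R by apply/ltW/ln_sublinear; lra.
have ie0 : 0 < eta^-1 by rewrite invr_gt0; lra.
have ie1 : eta^-1 <= 1 by rewrite invf_le1 //; lra.
have q : eta^-1 * (K%:R * ln K%:R) <= K%:R^+2.
  have q1 : K%:R * ln K%:R <= K%:R^+2 :> R by rewrite expr2; apply: ler_wpM2l; lra.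
  have q2 : 0 <= K%:R * ln K%:R :> R by apply: mulr_ge0; lra.
  nra.
have -> : eta^-1 * (- (K%:R * ln K%:R)) = - (eta^-1 * (K%:R * ln K%:R)) by ring.
lra.
Qed.

Theorem corollary5p6 (R : realType) (K : nat) (Rmax : R) :
  (2 <= K)%N -> 0 < Rmax ->
  exists (calpha ceta C : R), 0 < calpha /\ 0 < ceta /\ 0 < C /\
  forall (d : measure_display) (T : measurableType d) (P : probability T R)
    (X : 'I_K -> T -> R) (r : 'I_K -> R) (astar : 'I_K) (Delta : R),
    (forall a, measurable_fun setT (X a)) ->
    (forall a w, `|X a w| <= Rmax) ->
    (forall a, (\int[P]_w (X a w)%:E = (r a)%:E)%E) ->
    (forall a a' : 'I_K, a != a' -> r a != r a') ->
    (forall a, r a <= r astar) ->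
    is_min_gap r Delta ->
    forall Th : nat, (1 <= Th)%N ->
    let alpha := calpha * (Th%:R `^ (- (3 / 7))) in
    let eta := ceta * (Th%:R `^ (1 / 7)) in
    (exp_regret P X r astar alpha eta Th (fun _ => 0%R)
      <= (C * Delta `^ (- (2 / 7)) * Th%:R `^ (6 / 7))%:E)%E.
Proof.
move=> hK2 hR.
have hK : 1 <= K%:R :> R by rewrite ler1n; apply: leq_trans hK2.
set G := Rmax + K%:R.
have G0 : 0 < G by rewrite /G; lra.
set Lc := 16 * Rmax + 2 * K%:R.
set C0 := 3 * K%:R^+2 + G * (1 + 8 * Rmax) * Lc / 2 + 2 * G * (1 + 8 * Rmax) * (2 * Rmax + K%:R^+2).
have C00 : 0 < C0.
  rewrite /C0; have : 0 < G * (1 + 8 * Rmax) by apply: mulr_gt0; lra.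
  have : 0 < Lc by rewrite /Lc; lra.
  have : 0 < K%:R^+2 :> R by apply: exprn_gt0; lra.
  nra.
have p0 : 0 < (2 * Rmax) `^ (2 / 7) by apply: powR_gt0; lra.
exists (1 / (2 * G)), 1, (C0 * (2 * Rmax) `^ (2 / 7)).
split; first by apply: divr_gt0; lra.
split; first lra.
split; first exact: mulr_gt0.
move=> d T P X r astar Delta mX bX iX hne hstar hgap Th hTh.
cbv zeta.
set alpha := 1 / (2 * G) * Th%:R `^ (- (3 / 7)).
set eta := 1 * Th%:R `^ (1 / 7).
have hr b : `|r b| <= Rmax := r_bound d T P X r Rmax b mX bX iX.
have T1 : 1 <= Th%:R :> R by rewrite ler1n.
set s := Th%:R `^ (1 / 7) : R.
have s1 : 1 <= s.
  have h1 : (1:R) = 1 `^ (1/7) by rewrite powR1.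
  rewrite {1}h1 /s.
  by apply: ge0_ler_powR => //; rewrite ?nnegrE; lra.
have pw k : Th%:R `^ (k%:R / 7) = s ^+ k.
  rewrite /s -powR_mulrn; last exact: powR_ge0.
  by rewrite -powRrM; congr (_ `^ _); ring.
have eT : Th%:R = s ^+ 7 :> R.
  rewrite -(pw 7%N) divff; last by rewrite pnatr_eq0.
  rewrite powRr1 //; lra.
have e3 : Th%:R `^ (- (3 / 7)) = (s ^+ 3)^-1 by rewrite powRN pw.
have e6 : Th%:R `^ (6 / 7) = s ^+ 6 by rewrite pw.
have eeta : eta = s by rewrite /eta mul1r.
have ealpha : alpha = 1 / (2 * G) / s ^+ 3 by rewrite /alpha e3.
have s3 : 1 <= s ^+ 3 by apply: exprn_ege1.
have s0 : 0 < s by lra.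
have ha : 0 < alpha.
  rewrite ealpha; apply: divr_gt0; [apply: divr_gt0; lra| apply: exprn_gt0 => //].
have hag : alpha * (Rmax + K%:R) <= 1/2.
  rewrite ealpha -/G.
  have -> : 1 / (2 * G) / s ^+ 3 * G = 1 / 2 / s ^+ 3.
    by field; apply/andP; split; apply/lt0r_neq0 => //; exact: exprn_gt0.
  rewrite ler_pdivrMr; last exact: exprn_gt0.
  nra.
have he : 1 <= eta by rewrite eeta.
have [_ hmain] := main_ind astar d T P X r astar Rmax alpha eta mX bX iX hr hstar he ha hag Th
   (fun _ => 0).
apply: le_trans hmain _; rewrite lee_fin.
set B := (1 + 8 * Rmax) * eta ^+ 2 / alpha.
have eB : B = 2 * G * (1 + 8 * Rmax) * s ^+ 5.
  rewrite /B ealpha eeta; field.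
  apply/andP; split; apply/lt0r_neq0 => //; exact: exprn_gt0.
have B0 : 0 <= B by rewrite eB; apply: mulr_ge0; [apply: mulr_ge0; lra| apply: exprn_ge0; lra].
set A := 3 * K%:R ^+ 2 / eta + _.
have eA : A * Th%:R = (3 * K%:R^+2 + G * (1 + 8 * Rmax) * Lc / 2) * s ^+ 6.
  rewrite /A -/B -/Lc eB ealpha eeta eT -/G; field.
  apply/andP; split; apply/lt0r_neq0 => //.
have hPhi := Phi0_ge astar eta r Rmax he hr.
have hB2 : B * (Rmax - Phi eta r (fun=> 0)) <= B * (2 * Rmax + K%:R^+2).
  by apply: ler_wpM2l => //; lra.
have hB3 : B * (2 * Rmax + K%:R^+2) <= 2 * G * (1 + 8 * Rmax) * (2 * Rmax + K%:R^+2) * s ^+ 6.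
  rewrite eB.
  have c0 : 0 <= 2 * G * (1 + 8 * Rmax) * (2 * Rmax + K%:R^+2).
    have : 0 <= K%:R ^+ 2 :> R by exact: sqr_ge0.
    have : 0 <= G * (1 + 8 * Rmax) by apply: mulr_ge0; lra.
    nra.
  have s5 : 0 <= s ^+ 5 by apply: exprn_ge0; lra.
  have q : 0 <= (2 * G * (1 + 8 * Rmax) * (2 * Rmax + K%:R^+2)) * s ^+ 5 * (s - 1).
    by apply: mulr_ge0; [exact: mulr_ge0|lra].
  rewrite (exprSr s 5).
  nra.
have hL : A * Th%:R + B * (Rmax - Phi eta r (fun=> 0)) <= C0 * s ^+ 6.
  rewrite eA /C0; lra.
apply: le_trans hL _.
rewrite e6; apply: ler_wpM2r; first by apply: exprn_ge0; lra.
have [hgap1 [a [a' [haa' eD]]]] := hgap.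
have D0 : 0 < Delta by rewrite eD normr_gt0 subr_eq0; exact: hne.
have D2 : Delta <= 2 * Rmax.
  rewrite eD; apply: (le_trans (ler_normB _ _)); have := hr a; have := hr a'; lra.
have q0 : 0 < Delta `^ (2 / 7) by apply: powR_gt0.
have q1 : Delta `^ (2 / 7) <= (2 * Rmax) `^ (2 / 7).
  by apply: ge0_ler_powR; rewrite ?nnegrE; lra.
rewrite powRN -mulrA -[leLHS]mulr1; apply: ler_wpM2l; first lra.
rewrite ler_pdivlMr //; lra.
Qed.
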